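(* Let $d\geq 2$ and let $u,v\in\mathcal M_d$ with $u\geq_{lex}v$ and $x_1\mid u$ be such that $I=(\mathcal L(u,v))\subset S$ is a completely lexsegment ideal which is not an initial lexsegment ideal. Let $j$ be the exponent of $x_n$ in $v$ and let $a=|\mathcal M_d\setminus\mathcal L^i(u)|$. Then $I$ is a Gotzmann ideal if and only if $$a\geq \binom{n+d-1}{d}-(j+1).$$
   Context: $k$ is a field, $S=k[x_1,\ldots,x_n]$ standard graded. $\mathcal M_d$ is the set of monomials of degree $d$ in $S$, ordered lexicographically with $x_1>\cdots>x_n$; $|\mathcal M_d|=\binom{n+d-1}{d}$. For $u\geq_{lex}v$ in $\mathcal M_d$, $\mathcal L(u,v)=\{w\in\mathcal M_d: u\geq_{lex}w\geq_{lex}v\}$ and $\mathcal L^i(v)=\{w\in\mathcal M_d: w\geq_{lex} v\}$ (initial lexsegment); an initial lexsegment ideal is an ideal generated by some $\mathcal L^i(v)$. For a set $\mathcal L\subset\mathcal M_d$, its shadow is $\mathrm{Shad}(\mathcal L)=\{x_iw: w\in\mathcal L, 1\le i\le n\}\subset\mathcal M_{d+1}$, and iterated shadows are defined recursively. A lexsegment $\mathcal L$ is completely lexsegment if all its iterated shadows are lexsegments (of the corresponding degrees); $(\mathcal L)$ is then called a completely lexsegment ideal. A graded ideal $I$ generated in degree $d$ is Gotzmann if the number of minimal generators of $\mathfrak m I$ (i.e. $\dim_k I_{d+1}$, $\mathfrak m=(x_1,\ldots,x_n)$) equals $|\mathrm{Shad}(\mathcal L)|$, where $\mathcal L$ is the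 initial lexsegment of $\mathcal M_d$ with $|\mathcal L|=\dim_k I_d$; equivalently, $I$ and the ideal generated by $\mathcal L$ have the same Hilbert function. *)

(* Defs.v *)
(* Monomials x_1^{e_1}...x_n^{e_n} are represented by their
   exponent lists [:: e_1; ...; e_n] : seq nat (index 0 <-> x_1). *)
From mathcomp Require Import all_boot.
Set Implicit Arguments. Unset Strict Implicit. Unset Printing Implicit Defensive.

Definition inM (n d : nat) (w : seq nat) : bool := (size w == n) && (sumn w == d).

Fixpoint mons (n d : nat) : seq (seq nat) :=
  match n with
  | 0 => if d == 0 then [:: [::]] else [::]
  | n'.+1 => flatten [seq [seq k :: s | s <- mons n' (d - k)] | k <- iota 0 d.+1]
  end.

Fixpoint lexgt (u v : seq nat) : bool :=
  match u, v with
  | a :: s, b :: t => (b < a) || ((a == b) && lexgt s t)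
  | _, _ => false
  end.
Definition lexge (u v : seq nat) : bool := (u == v) || lexgt u v.

(* a set of monomials of degree d is a predicate; we only consider its members in M_d *)
Definition card_deg (n d : nat) (L : pred (seq nat)) : nat := count L (mons n d).

Definition Lseg (n d : nat) (u v : seq nat) : pred (seq nat) :=
  fun w => [&& inM n d w, lexge u w & lexge w v].
Definition Linit (n d : nat) (v : seq nat) : pred (seq nat) :=
  fun w => inM n d w && lexge w v.

(* multiplication by x_(i+1) *)
Definition mulx (i : nat) (w : seq nat) : seq nat := incr_nth w i.

Definition shad (n d : nat) (L : pred (seq nat)) : pred (seq nat) :=
  fun w => has (fun w' => L w' && has (fun i => w == mulx i w') (iota 0 n)) (mons n d).

Fixpoint shadit (n d k : nat) (L : pred (seq nat)) : pred (seq nat) :=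
  match k with
  | 0 => fun w => inM n d w && L w
  | k'.+1 => shad n (d + k') (shadit n d k' L)
  end.

Definition is_lexseg (n d : nat) (L : pred (seq nat)) : Prop :=
  forall w1 w w2, inM n d w1 -> inM n d w2 -> L w1 -> L w2 ->
    inM n d w -> lexge w1 w -> lexge w w2 -> L w.

Definition completely_lexseg (n d : nat) (L : pred (seq nat)) : Prop :=
  forall k, is_lexseg n (d + k) (shadit n d k L).

Definition init_lexseg_card (n d m : nat) : pred (seq nat) :=
  fun w => w \in take m (sort lexge (mons n d)).

(* Gotzmann (for an ideal generated by the monomial set L subset M_d):
   dim I_{d+1} = |Shad(L)| equals |Shad(initial lexsegment of size |L|)| *)
Definition gotzmann (n d : nat) (L : pred (seq nat)) : Prop :=
  card_deg n d.+1 (shad n d L) =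
  card_deg n d.+1 (shad n d (init_lexseg_card n d (card_deg n d L))).

Definition is_init_lexseg (n d : nat) (L : pred (seq nat)) : Prop :=
  exists w, inM n d w /\ forall z, inM n d z -> L z = Linit n d w z.

(* Main.v *)
Require Import Defs.
From mathcomp Require Import all_boot.
From Stdlib Require Import Lia.
Set Implicit Arguments. Unset Strict Implicit. Unset Printing Implicit Defensive.

Lemma lexgt_irr s : lexgt s s = false.
Proof. by elim: s => //= a s ->; rewrite ltnn eqxx. Qed.

Lemma lexgt_trans x y z : lexgt x y -> lexgt y z -> lexgt x z.
Proof.
elim: y x z => [|b t IH] [|a s] [|c r] //=.
case/orP=> [h1|/andP[/eqP e1 h1]]; case/orP=> [h2|/andP[/eqP e2 h2]].
- by rewrite (ltn_trans h2 h1).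
- by rewrite -e2 h1.
- by rewrite e1 h2.
- by rewrite e1 e2 eqxx (IH _ _ h1 h2) orbT.
Qed.

Lemma lexgt_asym x y : lexgt x y -> lexgt y x = false.
Proof. by move=> h; apply/negP=> h'; have := lexgt_trans h h'; rewrite lexgt_irr. Qed.

Lemma lexgt_total x y : size x = size y -> x != y -> lexgt x y || lexgt y x.
Proof.
elim: x y => [|a s IH] [|b t] //= [] hs hne.
case: (ltngtP a b) => hab /=; rewrite ?orbT //.
subst b; apply: IH => //.
by apply: contraNneq hne => ->.
Qed.

Lemma lexgeNgt x y : size x = size y -> lexge x y = ~~ lexgt y x.
Proof.
move=> hs; rewrite /lexge; case: (eqVneq x y) => [->|hne] /=.
  by rewrite lexgt_irr.
case/orP: (lexgt_total hs hne) => h; first by rewrite h (lexgt_asym h).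
by rewrite h; case: (lexgt x y) (lexgt_asym h) => // ->.
Qed.

Lemma lexge_trans x y z : lexge x y -> lexge y z -> lexge x z.
Proof.
rewrite /lexge; case/orP=> [/eqP->//|h1]; case/orP=> [/eqP<-|h2]; first by rewrite h1 orbT.
by rewrite (lexgt_trans h1 h2) orbT.
Qed.

Lemma lexgt_ge_trans x y z : lexgt x y -> lexge y z -> lexgt x z.
Proof. by move=> h; case/orP=> [/eqP<-//|h2]; apply: lexgt_trans h h2. Qed.

Lemma lexge_gt_trans x y z : lexge x y -> lexgt y z -> lexgt x z.
Proof. by case/orP=> [/eqP->//|h1] h2; apply: lexgt_trans h1 h2. Qed.

Lemma lexgt_mulx u v i : size u = size v -> i < size u ->
  lexgt (mulx i u) (mulx i v) = lexgt u v.
Proof.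
rewrite /mulx; elim: u v i => [|a s IH] [|b t] [|i] //= [] hs hi.
by rewrite IH.
Qed.

Lemma lexgt_mulx_lt c i l : i < l -> l < size c -> lexgt (mulx i c) (mulx l c).
Proof.
rewrite /mulx; elim: c i l => [|a s IH] [|i] [|l] //= hil hl.
  by rewrite ltnSn.
by rewrite ltnn eqxx IH.
Qed.

Lemma mulx_decomp a b i l : mulx i a = mulx l b -> i != l -> size a = size b ->
  i < size a -> l < size a ->
  exists c, [/\ a = mulx l c, b = mulx i c & size c = size a].
Proof.
rewrite /mulx; elim: a b i l => [|x s IH] [|y t] [|i] [|l] //= e hil [] hs hi hl.
- case: e => e1 e2; subst; by exists (x :: t); rewrite /= hs.
- case: e => e1 e2; subst; by exists (y :: s); rewrite /= hs.
- case: e => <- e; have [c [h1 h2 h3]] := IH _ _ _ e hil hs hi hl.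
  by exists (x :: c); rewrite /= -h1 -h2 h3.
Qed.

Lemma lexgt_mulx_eq a b i l n : mulx i a = mulx l b -> i < l -> l < n ->
  size a = n -> size b = n -> lexgt b a.
Proof.
move=> e hil hl ha hb.
have hi : i < size a by rewrite ha; apply: ltn_trans hl.
have hl' : l < size a by rewrite ha.
have hne : i != l by rewrite ltn_eqF.
have [c [h1 h2 h3]] := mulx_decomp e hne (etrans ha (esym hb)) hi hl'.
by rewrite h1 h2; apply: lexgt_mulx_lt; rewrite // h3 ha.
Qed.

Lemma mulx_inj i a b : mulx i a = mulx i b -> size a = size b -> i < size a -> a = b.
Proof.
rewrite /mulx; elim: a b i => [|x s IH] [|y t] [|i] //= e [] hs hi.
  by case: e => -> ->.
by case: e => -> e; rewrite (IH _ _ e hs hi).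
Qed.

Lemma size_mulx i w : i < size w -> size (mulx i w) = size w.
Proof. by rewrite /mulx size_incr_nth => ->. Qed.

Lemma sumn_mulx i w : i < size w -> sumn (mulx i w) = (sumn w).+1.
Proof.
rewrite /mulx; elim: w i => [|x s IH] [|i] //= hi.
by rewrite IH // addnS.
Qed.

Lemma inM_mulx n d i w : inM n d w -> i < n -> inM n d.+1 (mulx i w).
Proof.
case/andP=> /eqP hs /eqP hd hi; rewrite /inM size_mulx ?sumn_mulx ?hs ?hd ?eqxx //;
by rewrite hs.
Qed.

Definition decn (w : seq nat) i := set_nth 0 w i (nth 0 w i).-1.

Lemma mulx_decn w i : i < size w -> 0 < nth 0 w i -> mulx i (decn w i) = w.
Proof.
move=> hi hp; apply: (@eq_from_nth _ 0).
  by rewrite /mulx size_incr_nth /decn size_set_nth (maxn_idPr hi) hi.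
move=> k _; rewrite /mulx nth_incr_nth /decn nth_set_nth /=.
case: (eqVneq i k) => [<-|hik]; first by rewrite ?eqxx add1n prednK.
by [].
Qed.

Lemma size_decn w i : i < size w -> size (decn w i) = size w.
Proof. by move=> hi; rewrite /decn size_set_nth (maxn_idPr hi). Qed.

Lemma inM_decn n d w i : inM n d.+1 w -> i < n -> 0 < nth 0 w i -> inM n d (decn w i).
Proof.
case/andP=> /eqP hs /eqP hd hi hp.
have hi' : i < size w by rewrite hs.
have e := mulx_decn hi' hp.
rewrite /inM size_decn ?hs ?eqxx //=.
have : sumn (mulx i (decn w i)) = d.+1 by rewrite e.
by rewrite sumn_mulx ?size_decn ?hs // => -[->].
Qed.

Lemma mem_mons n d w : (w \in mons n d) = inM n d w.
Proof.
rewrite /inM; elim: n d w => [|n IH] d w.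
  by case: d => [|d] /=; case: w => [|a s] //=.
have -> : mons n.+1 d = flatten [seq [seq k :: s | s <- mons n (d - k)] | k <- iota 0 d.+1] by [].
apply/flatten_mapP/idP.
  case=> k; rewrite mem_iota add0n ltnS => hk /mapP[s hs ->] /=.
  rewrite IH in hs; case/andP: hs => /eqP-> /eqP->.
  by rewrite subnKC // !eqxx.
case: w => [|a s]; first by [].
move=> /andP[hs hd].
have {}hs : size s = n by move: hs => /eqP [].
have {}hd : a + sumn s = d by move/eqP: hd.
exists a; first by rewrite mem_iota add0n ltnS -hd leq_addr.
apply/mapP; exists s => //; rewrite IH hs eqxx /= -hd.
by rewrite addKn.
Qed.

Lemma mons_uniq n d : uniq (mons n d).
Proof.
elim: n d => [|n IH] d; first by case: d.
have -> : mons n.+1 d = [seq k :: s | k <- iota 0 d.+1, s <- mons n (d - k)] by [].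
apply: allpairs_uniq_dep.
- exact: iota_uniq.
- by move=> k _; exact: IH.
- by case=> [a s] [b t] _ _ /= [-> ->].
Qed.
From mathcomp Require Import all_boot.
From Stdlib Require Import Lia.
Set Implicit Arguments. Unset Strict Implicit. Unset Printing Implicit Defensive.

Lemma count_inj (T1 T2 : eqType) (s1 : seq T1) (s2 : seq T2) (P : pred T1) (Q : pred T2)
  (f : T1 -> T2) : uniq s1 ->
  (forall x y, x \in s1 -> y \in s1 -> P x -> P y -> f x = f y -> x = y) ->
  (forall x, x \in s1 -> P x -> f x \in s2 /\ Q (f x)) -> count P s1 <= count Q s2.
Proof.
move=> u1 hinj hmap; rewrite -!size_filter.
rewrite -(size_map f); apply: uniq_leq_size.
  rewrite map_inj_in_uniq ?filter_uniq // => x y.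
  by rewrite !mem_filter => /andP[px sx] /andP[py sy]; apply: hinj.
move=> z /mapP[x]; rewrite mem_filter => /andP[px sx] ->.
by have [h1 h2] := hmap x sx px; rewrite mem_filter h1 h2.
Qed.

Lemma count_or (T : Type) (a b : pred T) s : (forall x, ~~ (a x && b x)) ->
  count (fun x => a x || b x) s = count a s + count b s.
Proof.
move=> h; elim: s => //= x s ->.
by have := h x; case: (a x); case: (b x) => //= _; rewrite ?add0n ?addn0 ?addnS ?addSn ?addnA.
Qed.

Lemma count_split (T : Type) (P Q : pred T) s : (forall z, P z -> Q z) ->
  count Q s = count P s + count (fun z => Q z && ~~ P z) s.
Proof.
move=> h; elim: s => //= x s ->.
have := h x; case: (P x); case: (Q x) => //= hh; rewrite ?add0n ?addn0 ?addnS ?addSn ?addnA //.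
by have := hh isT.
Qed.

Lemma count_pred1_mons n d w : inM n d w -> count (pred1 w) (mons n d) = 1.
Proof.
move=> hw; have := count_uniq_mem w (mons_uniq n d).
by rewrite mem_mons hw.
Qed.

Lemma shadP n d (L : pred (seq nat)) z :
  reflect (exists w i, [/\ inM n d w, L w, i < n & z = mulx i w]) (shad n d L z).
Proof.
apply: (iffP hasP).
  case=> w; rewrite mem_mons => hw /andP[Lw /hasP[i]]; rewrite mem_iota add0n => hi /eqP ->.
  by exists w, i.
case=> w [i [hw Lw hi ->]]; exists w; first by rewrite mem_mons.
by rewrite Lw; apply/hasP; exists i; rewrite ?mem_iota.
Qed.

Lemma shad_inM n d L z : shad n d L z -> inM n d.+1 z.
Proof. by case/shadP=> w [i [hw _ hi ->]]; apply: inM_mulx. Qed.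

Lemma shad_ext n d (P Q : pred (seq nat)) : (forall w, inM n d w -> P w = Q w) ->
  forall z, shad n d P z = shad n d Q z.
Proof.
move=> h z; apply: eq_in_has => w; rewrite mem_mons => hw /=.
by rewrite h.
Qed.

Lemma shad_mono n d (P Q : pred (seq nat)) : (forall w, inM n d w -> P w -> Q w) ->
  forall z, shad n d P z -> shad n d Q z.
Proof.
move=> h z /shadP[w [i [hw Pw hi ->]]]; apply/shadP; exists w, i; split => //.
exact: h.
Qed.

Definition rank n d (w : seq nat) := count (fun z => lexgt z w) (mons n d).

Lemma rank_le n d w z : lexge w z -> rank n d w <= rank n d z.
Proof.
move=> h; apply: sub_count => y /= hy; exact: lexgt_ge_trans hy h.
Qed.

Lemma rank_lt n d w z : inM n d w -> lexgt w z -> rank n d w < rank n d z.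
Proof.
move=> hw h; rewrite /rank.
have e : count (fun y => lexgt y w || (y == w)) (mons n d) = (rank n d w).+1.
  rewrite count_or ?count_pred1_mons // ?addn1 // => x.
  by apply/negP=> /andP[h1 /eqP e]; rewrite e lexgt_irr in h1.
rewrite -e; apply: sub_count => y /= /orP[hy|/eqP->] //.
exact: lexgt_trans hy h.
Qed.

Lemma rank_gt n d w z : inM n d w -> inM n d z -> rank n d w < rank n d z -> lexgt w z.
Proof.
move=> hw hz hr; case: (eqVneq w z) => [e|hne]; first by rewrite e ltnn in hr.
have hs : size w = size z by case/andP: hw => /eqP->; case/andP: hz => /eqP->.
case/orP: (lexgt_total hs hne) => // h.
by have := rank_lt hz h; rewrite ltnNge (ltnW hr).
Qed.

Lemma card_Linit n d z : inM n d z -> card_deg n d (Linit n d z) = (rank n d z).+1.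
Proof.
move=> hz; rewrite /card_deg /rank.
rewrite (eq_in_count (a2 := fun y => lexgt y z || (y == z))); last first.
  move=> y; rewrite mem_mons /Linit => hy; rewrite hy /lexge /=.
  by rewrite orbC.
rewrite count_or ?count_pred1_mons ?addn1 // => x.
by apply/negP=> /andP[h1 /eqP e]; rewrite e lexgt_irr in h1.
Qed.

Lemma sorted_index w s : sorted lexge s -> uniq s -> w \in s ->
  index w s = count (fun z => lexgt z w) s.
Proof.
have htr : transitive lexge by move=> y x z; apply: lexge_trans.
move=> hs hu hw; move: hs hu; case/splitPr: hw => s1 s2.
rewrite (sorted_pairwise htr) pairwise_cat pairwise_cons => /and4P[hrel _ hall _].
rewrite cat_uniq => /and3P[_ hn _].
rewrite index_cat count_cat /= lexgt_irr add0n.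
have hw1 : w \notin s1 by apply: contra hn => h; apply/hasP; exists w; rewrite ?mem_head.
rewrite (negbTE hw1) /= eqxx addn0.
have -> : count (fun z => lexgt z w) s2 = 0.
  rewrite (eq_in_count (a2 := pred0)) ?count_pred0 // => x hx /=.
  have := allP hall x hx; case/orP=> [/eqP->|h]; first by rewrite lexgt_irr.
  exact: lexgt_asym.
rewrite addn0; apply/esym/eqP; rewrite -all_count; apply/allP => x hx.
have : lexge x w by move/allrelP: hrel; apply => //; rewrite mem_head.
case/orP=> [/eqP e|//]; by rewrite -e hx in hw1.
Qed.

Lemma init_rank n d m w : inM n d w -> init_lexseg_card n d m w = (rank n d w < m).
Proof.
move=> hw; rewrite /init_lexseg_card.
set s := sort lexge (mons n d).
have hp : perm_eq s (mons n d) by apply/permPl/perm_sort.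
have hws : w \in s by rewrite (perm_mem hp) mem_mons.
rewrite in_take // sorted_index //.
- by rewrite /rank (permP hp).
- apply: (sort_sorted_in (P := inM n d)).
    move=> x y hx hy; rewrite /lexge; case: (eqVneq x y) => //= hne.
    apply: lexgt_total => //.
    by case/andP: hx => /eqP->; case/andP: hy => /eqP->.
  by apply/allP => x; rewrite mem_mons.
- by rewrite (perm_uniq hp) mons_uniq.
Qed.

Lemma card_init n d m : m <= size (mons n d) -> card_deg n d (init_lexseg_card n d m) = m.
Proof.
move=> hm; rewrite /card_deg /init_lexseg_card.
set s := sort lexge (mons n d).
have hp : perm_eq s (mons n d) by apply/permPl/perm_sort.
rewrite -(permP hp).
have hsplit : s = take m s ++ drop m s by rewrite cat_take_drop.
rewrite [X in count _ X]hsplit count_cat.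
have hu : uniq s by rewrite (perm_uniq hp) mons_uniq.
have hsz : m <= size s by rewrite (perm_size hp).
rewrite (eq_in_count (a2 := predT) (s := take m s)) ?count_predT ?size_takel //.
have -> : count (fun w => w \in take m s) (drop m s) = 0.
  move: hu; rewrite -{1}(cat_take_drop m s) cat_uniq => /and3P[_ hn _].
  apply/eqP; rewrite -leqn0 leqNgt -has_count; apply: contra hn => /hasP[x h1 h2].
  by apply/hasP; exists x.
by rewrite addn0.
Qed.

Lemma count_split_in (T : eqType) (P Q : pred T) s : {in s, forall z, P z -> Q z} ->
  count Q s = count P s + count (fun z => Q z && ~~ P z) s.
Proof.
elim: s => //= x s IH h.
rewrite IH; last by move=> z hz; apply: h; rewrite inE hz orbT.
have := h x (mem_head _ _); case: (P x); case: (Q x) => //= hh;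
  rewrite ?add0n ?addn0 ?addnS ?addSn ?addnA //.
by have := hh isT.
Qed.

Lemma nth_le_sumn w i : nth 0 w i <= sumn w.
Proof.
elim: w i => [|a s IH] [|i] //=; first exact: leq_addr.
by apply: leq_trans (IH i) _; apply: leq_addl.
Qed.

Definition up n w := mulx n.-2 (decn w n.-1).

Lemma no_between k c z : size c = k.+2 -> size z = k.+2 -> sumn z = (sumn c).+1 ->
  lexgt (mulx k c) z -> lexgt z (mulx k.+1 c) -> False.
Proof.
rewrite /mulx; elim: k c z => [|k IH] [|a [|b c]] [|x [|y z]] //=.
- case: c => // _; case: z => // _.
  rewrite !addn0 => hs /=.
  move=> /orP[/ltP h1|/andP[/eqP e1 /orP[/ltP h1|/andP[_ //]]]];
  move=> /orP[/ltP h2|/andP[/eqP e2 /orP[/ltP h2|/andP[_ //]]]]; rewrite ?addnE in hs; lia.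
- move=> [hc] [hz] hs.
  rewrite ?addnE in hs.
  move=> /orP[/ltP h1|/andP[/eqP e1 h1]] /orP[/ltP h2|/andP[/eqP e2 h2]]; try lia.
  subst a; apply: (IH (b :: c) (y :: z)) => //=; rewrite ?addnE; lia.
Qed.

Lemma inM_size n d w : inM n d w -> size w = n.
Proof. by case/andP=> /eqP. Qed.

Lemma up_props n d w : 1 < n -> inM n d w -> 0 < nth 0 w n.-1 ->
  [/\ inM n d (up n w), nth 0 (up n w) n.-1 = (nth 0 w n.-1).-1, lexgt (up n w) w &
     forall z, inM n d z -> lexgt z w = (z == up n w) || lexgt z (up n w)].
Proof.
case: n => [|[|k]] // _ hw hp; rewrite /up /=; rewrite /= in hp.
have hs := inM_size hw.
have hd : 0 < d.
  apply: leq_trans hp _; case/andP: hw => _ /eqP <-; exact: nth_le_sumn.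
case: d hd hw => // d _ hw.
have hn1 : k.+1 < k.+2 by [].
have hc := inM_decn hw hn1 hp.
have hcs := inM_size hc.
have hn1' : k.+1 < size w by rewrite hs.
have ew := mulx_decn hn1' hp.
set c := decn w k.+1 in hc hcs ew *.
have hup : inM k.+2 d.+1 (mulx k c) by apply: inM_mulx => //; apply: ltnW.
have hgt : lexgt (mulx k c) w by rewrite -{1}ew; apply: lexgt_mulx_lt => //; rewrite hcs.
split => //.
- rewrite /mulx nth_incr_nth /c /decn nth_set_nth /= eqxx.
  by rewrite ltn_eqF.
move=> z hz; case: (eqVneq z (mulx k c)) => [->|hne] /=; first by [].
apply/idP/idP => h; last exact: lexgt_trans h hgt.
have hsz : size z = size (mulx k c) by rewrite (inM_size hz) (inM_size hup).
case/orP: (lexgt_total hsz hne) => // h2.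
exfalso; apply: (@no_between k c z) => //.
- by rewrite (inM_size hz).
- by case/andP: hz => _ /eqP->; case/andP: hc => _ /eqP->.
- by rewrite ew.
Qed.

Lemma mulx_comm i j w : i < size w -> j < size w -> mulx i (mulx j w) = mulx j (mulx i w).
Proof.
rewrite /mulx; elim: w i j => [|a s IH] [|i] [|j] //= hi hj.
by rewrite IH.
Qed.

Lemma nth_mulx i j w : nth 0 (mulx i w) j = (i == j) + nth 0 w j.
Proof. exact: nth_incr_nth. Qed.

Definition Rgt n d w := fun z => inM n d z && lexgt z w.

Lemma not_shad_R n d w k : inM n d w -> k < n ->
  (forall l, k < l < n -> nth 0 w l = 0) ->
  ~~ shad n d (Rgt n d w) (mulx k w).
Proof.
move=> hw hk hl; apply/negP => /shadP[w' [l [hw' /andP[_ hgt] hln e]]].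
have hs := inM_size hw; have hs' := inM_size hw'.
have hkw : k < size w by rewrite hs.
have hlw : l < size w by rewrite hs.
have hlw' : l < size w' by rewrite hs'.
case: (ltngtP l k) => hlk.
- have := lexgt_mulx_eq (esym e) hlk hk hs' hs.
  by rewrite (lexgt_asym hgt).
- have hne : k != l by rewrite ltn_eqF.
  have [c [h1 h2 h3]] := mulx_decomp e hne (etrans hs (esym hs')) hkw hlw.
  have := hl l; rewrite hlk hln => /(_ isT); rewrite h1 nth_mulx eqxx.
  by [].
- subst l; have := mulx_inj (esym e) (etrans hs' (esym hs)) hlw'.
  by move=> ew; rewrite ew lexgt_irr in hgt.
Qed.

Lemma shadR_sub n d w z : shad n d (Rgt n d w) z -> shad n d (Linit n d w) z.
Proof.
apply: shad_mono => y hy /andP[_ h]; by rewrite /Linit hy /lexge h orbT.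
Qed.

Lemma shad_inc1 n d w : 1 < n -> inM n d w -> 0 < nth 0 w n.-1 ->
  card_deg n d.+1 (shad n d (Linit n d w)) = (card_deg n d.+1 (shad n d (Rgt n d w))).+1.
Proof.
move=> hn hw hp; rewrite /card_deg (count_split_in (P := shad n d (Rgt n d w))); last first.
  by move=> z _; apply: shadR_sub.
have hn1 : n.-1 < n by rewrite prednK // ltnW.
have hs := inM_size hw.
rewrite -[RHS]addn1; congr (_ + _).
transitivity (count (pred1 (mulx n.-1 w)) (mons n d.+1)); last first.
  by apply: count_pred1_mons; apply: inM_mulx.
apply: eq_in_count => z; rewrite mem_mons => hz /=.
apply/idP/idP; last first.
  move/eqP->; rewrite not_shad_R // ?andbT; last first.
    by move=> l /andP[h1 h2]; move: h1; rewrite ltnNge -ltnS prednK ?h2 // ltnW.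
  apply/shadP; exists w, n.-1; split => //.
  by rewrite /Linit hw /lexge eqxx.
case/andP=> /shadP[w' [i [hw' hL hi ->]]] hnR.
have ew' : w' = w.
  case/andP: hL => _ /orP[/eqP //|hg].
  by move: hnR; case/negP; apply/shadP; exists w', i; split => //; rewrite /Rgt hw'.
subst w'; case: (ltngtP i n.-1) => hin; last by rewrite hin.
- exfalso; move: hnR; case/negP.
  have hd : 0 < d.
    apply: leq_trans hp _; case/andP: hw => _ /eqP <-; exact: nth_le_sumn.
  case: d hd hw hw' hz hL => // d _ hw _ hz hL.
  have hn1' : n.-1 < size w by rewrite hs.
  have hc := inM_decn hw hn1 hp.
  have ew := mulx_decn hn1' hp.
  set c := decn w n.-1 in hc ew.
  have hcs := inM_size hc.
  have hin1 : i < n by apply: ltn_trans hin hn1.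
  have hic : inM n d.+1 (mulx i c) by apply: inM_mulx.
  apply/shadP; exists (mulx i c), n.-1; split => //.
  + rewrite /Rgt hic /=.
    by rewrite -{1}ew; apply: lexgt_mulx_lt; rewrite // hcs.
  + by rewrite -{1}ew mulx_comm // hcs // (ltn_trans hin hn1).
- have h := hi; rewrite -(prednK (ltnW hn)) ltnS in h.
  by rewrite ltnNge h in hin.
Qed.

Lemma shad_inc2 n d w : 1 < n -> inM n d w -> nth 0 w n.-1 = 0 ->
  (card_deg n d.+1 (shad n d (Rgt n d w))).+2 <= card_deg n d.+1 (shad n d (Linit n d w)).
Proof.
move=> hn hw h0; rewrite /card_deg (count_split_in (P := shad n d (Rgt n d w)) (Q := shad n d (Linit n d w))); last first.
  by move=> z _; apply: shadR_sub.
have hn1 : n.-1 < n by rewrite prednK // ltnW.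
have hn2 : n.-2 < n.-1 by clear -hn; case: n hn => [|[|n]].
have hn2' : n.-2 < n := ltn_trans hn2 hn1.
have hs := inM_size hw.
rewrite -[X in X <= _]addn2 leq_add2l.
have hne : mulx n.-1 w != mulx n.-2 w.
  apply/eqP => e; have := congr1 (fun s => nth 0 s n.-1) e.
  by rewrite /= !nth_mulx eqxx h0 (ltn_eqF hn2).
have h2 : count (fun z => (z == mulx n.-1 w) || (z == mulx n.-2 w)) (mons n d.+1) = 2.
  rewrite count_or; last first.
    by move=> x; apply/negP => /andP[/eqP -> /eqP e]; rewrite e eqxx in hne.
  by rewrite !count_pred1_mons //; apply: inM_mulx.
rewrite -h2; apply: sub_count => z /orP[] /eqP ->.
- rewrite not_shad_R // ?andbT.
    apply/shadP; exists w, n.-1; split => //; by rewrite /Linit hw /lexge eqxx.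
  by move=> l /andP[h1 h2']; move: h1; rewrite ltnNge -ltnS prednK ?h2' // ltnW.
- rewrite not_shad_R // ?andbT.
    apply/shadP; exists w, n.-2; split => //; by rewrite /Linit hw /lexge eqxx.
  move=> l /andP[h1 h2']; suff -> : l = n.-1 by [].
  move: h1 h2'; clear -hn; case: n hn => [|[|k]] //= _ h1 h2'.
  by apply/eqP; rewrite eqn_leq h1 -ltnS h2'.
Qed.

Lemma shad_inj_ineq n d (E F : pred (seq nat)) : 0 < n ->
  (forall w, inM n d w -> E w -> F w) ->
  (forall w w', inM n d w -> inM n d w' -> E w' -> lexgt w w' -> E w) ->
  card_deg n d.+1 (shad n d E) + card_deg n d F <=
  card_deg n d.+1 (shad n d F) + card_deg n d E.
Proof.
move=> hn hEF hdown; rewrite /card_deg.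
rewrite (count_split_in (P := E) (Q := F)); last first.
  by move=> w; rewrite mem_mons; apply: hEF.
rewrite (count_split_in (P := shad n d E) (Q := shad n d F) (s := mons n d.+1)); last first.
  by move=> z _; apply: shad_mono.
suff hxy : count (fun z => F z && ~~ E z) (mons n d) <=
  count (fun z => shad n d F z && ~~ shad n d E z) (mons n d.+1).
  by rewrite -addnA leq_add2l addnC leq_add2r.
have hn1 : n.-1 < n by rewrite prednK.
apply: (count_inj (f := mulx n.-1)); first exact: mons_uniq.
  move=> x y; rewrite !mem_mons => hx hy _ _ e.
  apply: mulx_inj e _ _; first by rewrite (inM_size hx) (inM_size hy).
  by rewrite (inM_size hx).
move=> w; rewrite mem_mons => hw /andP[Fw nEw]; split.
  by rewrite mem_mons; apply: inM_mulx.
apply/andP; split.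
  by apply/shadP; exists w, n.-1.
apply/negP => /shadP[w' [l [hw' Ew' hl e]]].
have hs := inM_size hw; have hs' := inM_size hw'.
case: (ltngtP l n.-1) => hln.
- have := lexgt_mulx_eq (esym e) hln hn1 hs' hs => hg.
  by rewrite (hdown _ _ hw hw' Ew' hg) in nEw.
- have h := hl; rewrite -(prednK hn) ltnS in h.
  by rewrite ltnNge h in hln.
- subst l; have hlw : n.-1 < size w by rewrite hs.
  have ew := mulx_inj e (etrans hs (esym hs')) hlw.
  by rewrite ew Ew' in nEw.
Qed.

Lemma size_mons_S n d :
  size (mons n.+1 d) = sumn [seq size (mons n (d - k)) | k <- iota 0 d.+1].
Proof.
have -> : mons n.+1 d = flatten [seq [seq k :: s | s <- mons n (d - k)] | k <- iota 0 d.+1] by [].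
rewrite size_flatten /shape -map_comp; congr sumn; apply: eq_map => k /=.
by rewrite size_map.
Qed.

Lemma size_mons_rec n d : size (mons n.+1 d.+1) = size (mons n d.+1) + size (mons n.+1 d).
Proof.
rewrite !size_mons_S.
have -> : iota 0 d.+2 = 0 :: map (addn 1) (iota 0 d.+1) by rewrite -iotaDl.
have e : forall s : seq nat, sumn [seq size (mons n (d.+1 - k)) | k <- 0 :: map (addn 1) s] =
  size (mons n d.+1) + sumn [seq size (mons n (d - k)) | k <- s].
  move=> s /=; rewrite subn0 -map_comp; congr (_ + sumn _); apply: eq_map => k /=.
exact: e.
Qed.

Lemma size_mons_0 n : size (mons n.+1 0) = size (mons n 0).
Proof. by rewrite size_mons_S /= addn0. Qed.

Lemma size_mons n d : size (mons n.+1 d) = 'C(n + d, d).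
Proof.
elim: n d => [|n IH] d.
  elim: d => [|d IHd]; first by [].
  by rewrite size_mons_rec IHd /= !binn.
elim: d => [|d IHd]; first by rewrite size_mons_0 IH !bin0.
rewrite size_mons_rec IH IHd.
by rewrite -addSnnS -[in RHS]addSnnS binS.
Qed.

Lemma lexge_mulx x y i : size x = size y -> i < size x -> lexge x y -> lexge (mulx i x) (mulx i y).
Proof.
move=> hs hi; rewrite /lexge; case/orP=> [/eqP->|h]; first by rewrite eqxx.
by rewrite lexgt_mulx // h orbT.
Qed.

Lemma lexge_mulx_le c i l : i <= l -> l < size c -> lexge (mulx i c) (mulx l c).
Proof.
rewrite leq_eqVlt /lexge; case/orP=> [/eqP->|h] hl; first by rewrite eqxx.
by rewrite lexgt_mulx_lt // orbT.
Qed.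

Lemma head_pos z u : lexgt z (mulx 0 u) -> 0 < size u -> 0 < nth 0 z 0.
Proof.
move=> h _; move: h; rewrite /mulx; case: u => [|a u]; case: z => [|b z] //=.
  by case/orP=> [h|/andP[/eqP e _]]; [apply: ltn_trans h | rewrite e].
case/orP=> [h|/andP[/eqP e _]]; last by rewrite e.
exact: leq_trans h.
Qed.

Lemma rank_up n d w : 1 < n -> inM n d w -> 0 < nth 0 w n.-1 ->
  rank n d w = (rank n d (up n w)).+1.
Proof.
move=> hn hw hp; have [hup _ hgt hchar] := up_props hn hw hp.
rewrite /rank (eq_in_count (a2 := fun z => (z == up n w) || lexgt z (up n w))); last first.
  by move=> z; rewrite mem_mons => hz; apply: hchar.
rewrite count_or ?count_pred1_mons // => x.
by apply/negP => /andP[/eqP -> h]; rewrite lexgt_irr in h.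
Qed.

Lemma chain n d v t : 1 < n -> inM n d v -> t <= nth 0 v n.-1 ->
  exists vt, [/\ inM n d vt, nth 0 vt n.-1 = nth 0 v n.-1 - t,
    rank n d vt + t = rank n d v &
    card_deg n d.+1 (shad n d (Linit n d vt)) + t = card_deg n d.+1 (shad n d (Linit n d v))].
Proof.
move=> hn hv; elim: t => [|t IH] ht.
  by exists v; rewrite subn0 !addn0.
have [vt [hvt hnth hrk hsh]] := IH (ltnW ht).
have hp : 0 < nth 0 vt n.-1 by rewrite hnth subn_gt0.
have [hup hnup _ _] := up_props hn hvt hp.
exists (up n vt); split => //.
- by rewrite hnup hnth subnS.
- by rewrite addnS -addSn -(rank_up hn hvt hp).
- rewrite addnS -hsh (shad_inc1 hn hvt hp) addSn; congr (_.+1 + _).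
  rewrite /card_deg; apply: eq_count => z; apply: shad_ext => w hw.
  have [_ _ _ hchar] := up_props hn hvt hp.
  by rewrite /Rgt /Linit hw (hchar _ hw) /lexge.
Qed.

Lemma count_gt_mulx0 n d u : 0 < n -> inM n d u ->
  count (fun z => lexgt z (mulx 0 u)) (mons n d.+1) = rank n d u.
Proof.
move=> hn hu; have hs := inM_size hu.
have hsu : 0 < size u by rewrite hs.
apply/eqP; rewrite eqn_leq; apply/andP; split.
- apply: (count_inj (f := fun z => decn z 0)); first exact: mons_uniq.
    move=> x y; rewrite !mem_mons => hx hy px py e.
    have hxs : 0 < size x by rewrite (inM_size hx).
    have hys : 0 < size y by rewrite (inM_size hy).
    by rewrite -(mulx_decn hxs (head_pos px hsu)) -(mulx_decn hys (head_pos py hsu)) e.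
  move=> z; rewrite mem_mons => hz pz.
  have hp := head_pos pz hsu.
  have hzs : 0 < size z by rewrite (inM_size hz).
  have hw := inM_decn hz hn hp.
  split; first by rewrite mem_mons.
  rewrite -(lexgt_mulx _ (i := 0)); first by rewrite mulx_decn.
  + by rewrite (inM_size hw) hs.
  + by rewrite (inM_size hw).
- apply: (count_inj (f := mulx 0)); first exact: mons_uniq.
    move=> x y; rewrite !mem_mons => hx hy _ _ e.
    apply: mulx_inj e _ _; first by rewrite (inM_size hx) (inM_size hy).
    by rewrite (inM_size hx).
  move=> w; rewrite mem_mons => hw pw; split.
    by rewrite mem_mons; apply: inM_mulx.
  by rewrite lexgt_mulx // ?(inM_size hw) ?hs.
Qed.

Lemma shadA_C n d u v : 0 < n -> inM n d u -> inM n d v -> lexge u v ->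
  is_lexseg n (d + 1) (shadit n d 1 (Lseg n d u v)) ->
  card_deg n d.+1 (shad n d (Linit n d v)) =
  card_deg n d.+1 (shad n d (Lseg n d u v)) + rank n d u.
Proof.
move=> hn hu hv huv hlex.
have hs := inM_size hu; have hsv := inM_size hv.
have hn1 : n.-1 < n by rewrite prednK.
rewrite /card_deg (count_split_in (P := shad n d (Lseg n d u v)) (Q := shad n d (Linit n d v))); last first.
  move=> z _; apply: shad_mono => w hw /and3P[_ _ h]; by rewrite /Linit hw.
congr (_ + _); rewrite -(count_gt_mulx0 hn hu); apply: eq_in_count => z.
rewrite mem_mons => hz /=.
have e1 : forall y, shadit n d 1 (Lseg n d u v) y = shad n d (Lseg n d u v) y.
  move=> y /=; rewrite addn0; apply: shad_ext => w hw; by rewrite /Lseg hw.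
have hAmax : forall y, shad n d (Lseg n d u v) y -> lexge (mulx 0 u) y.
  move=> y /shadP[w [i [hw /and3P[_ huw _] hi ->]]].
  have hws := inM_size hw.
  apply: (lexge_trans (y := mulx i u)).
    by apply: lexge_mulx_le => //; rewrite hs.
  by apply: lexge_mulx => //; rewrite ?hs ?hws.
apply/idP/idP.
- case/andP=> hC hnA; apply/negPn/negP => hng.
  have hle : lexge (mulx 0 u) z.
    rewrite lexgeNgt //; rewrite (inM_size hz) size_mulx ?hs //.
  case/shadP: hC => w [i [hw /andP[_ hwv] hi ez]].
  have hws := inM_size hw.
  have hge : lexge z (mulx n.-1 v).
    rewrite ez; apply: (lexge_trans (y := mulx i v)).
      by apply: lexge_mulx => //; rewrite ?hws ?hsv.
    apply: lexge_mulx_le; last by rewrite hsv.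
    by rewrite -ltnS prednK.
  move/negP: hnA; apply; rewrite -e1.
  have hmu : inM n (d + 1) (mulx 0 u) by rewrite addn1; apply: inM_mulx.
  have hmv : inM n (d + 1) (mulx n.-1 v) by rewrite addn1; apply: inM_mulx.
  have h1 : shadit n d 1 (Lseg n d u v) (mulx 0 u).
    rewrite e1; apply/shadP; exists u, 0; split => //.
    by rewrite /Lseg hu /lexge eqxx.
  have h2 : shadit n d 1 (Lseg n d u v) (mulx n.-1 v).
    rewrite e1; apply/shadP; exists v, n.-1; split => //.
    by rewrite /Lseg hv huv /lexge eqxx.
  have hz' : inM n (d + 1) z by rewrite addn1.
  exact: (hlex _ _ _ hmu hmv h1 h2 hz' hle hge).
- move=> hgt; apply/andP; split; last first.
    apply/negP => /hAmax; rewrite lexgeNgt ?hgt //.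
    by rewrite (inM_size hz) size_mulx ?hs.
  have hsu : 0 < size u by rewrite hs.
  have hp := head_pos hgt hsu.
  have hzs : 0 < size z by rewrite (inM_size hz).
  have hw := inM_decn hz hn hp.
  apply/shadP; exists (decn z 0), 0; split => //; last by rewrite mulx_decn.
  rewrite /Linit hw /lexge; apply/orP; right.
  apply: lexgt_ge_trans huv.
  rewrite -(lexgt_mulx _ (i := 0)); first by rewrite mulx_decn.
  + by rewrite (inM_size hw) hs.
  + by rewrite (inM_size hw).
Qed.

Lemma init_Linit n d z : inM n d z -> forall w, inM n d w ->
  init_lexseg_card n d (rank n d z).+1 w = Linit n d z w.
Proof.
move=> hz w hw; rewrite init_rank // ltnS /Linit hw /=.
apply/idP/idP => h; last exact: rank_le.
rewrite lexgeNgt ?(inM_size hw) ?(inM_size hz) //; apply/negP => hg.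
by have := rank_lt hz hg; rewrite ltnNge h.
Qed.

Lemma card_Lseg n d u v : inM n d u -> inM n d v -> lexge u v ->
  card_deg n d (Lseg n d u v) + rank n d u = (rank n d v).+1.
Proof.
move=> hu hv huv; rewrite -card_Linit // /card_deg.
rewrite (count_split_in (P := Lseg n d u v) (Q := Linit n d v)); last first.
  by move=> w _ /and3P[h1 _ h3]; rewrite /Linit h1 h3.
congr (_ + _); apply: eq_in_count => w; rewrite mem_mons => hw /=.
rewrite /Linit /Lseg hw /=.
have hs : size u = size w by rewrite (inM_size hu) (inM_size hw).
rewrite [lexge u w]lexgeNgt //.
case hg : (lexgt w u) => /=.
  have hwu : lexge w u by rewrite /lexge hg orbT.
  by rewrite (lexge_trans hwu huv).
by rewrite andbN.
Qed.

Lemma card_a n d u : inM n d u ->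
  card_deg n d (fun w => inM n d w && ~~ lexge w u) + (rank n d u).+1 = size (mons n d).
Proof.
move=> hu; rewrite -card_Linit // /card_deg addnC.
rewrite -(count_predT (mons n d)).
rewrite (count_split_in (P := Linit n d u) (Q := predT)) //.
congr (_ + _); apply: eq_in_count => w; rewrite mem_mons => hw /=.
by rewrite /Linit hw.
Qed.

Unset Implicit Arguments.

Theorem mainTheorem4 (n d : nat) (u v : seq nat) :
  2 <= d ->
  inM n d u -> inM n d v -> lexge u v ->
  0 < nth 0 u 0 ->
  completely_lexseg n d (Lseg n d u v) ->
  ~ is_init_lexseg n d (Lseg n d u v) ->
  let j := nth 0 v n.-1 in
  let a := card_deg n d (fun w => inM n d w && ~~ lexge w u) in
  gotzmann n d (Lseg n d u v) <-> 'C(n + d - 1, d) <= a + (j + 1).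
Proof.
move=> hd hu hv huv hu1 hcl hni.
have hn : 1 < n.
  clear -hd hu hv hni; case: n hu hv hni => [|[|k]] //.
  - by rewrite /inM => /andP[/eqP /size0nil -> /eqP h0]; rewrite -h0 in hd.
  - move=> hu hv hni; exfalso; apply: hni; exists u; split => // z hz.
    have e : forall x y, inM 1 d x -> inM 1 d y -> x = y.
      move=> [|x0 [|x1 x]] [|y0 [|y1 y]] //; rewrite /inM /= !addn0.
      by move=> /eqP-> /eqP->.
    by rewrite /Lseg /Linit hz (e z u hz hu) (e v u hv hu) /lexge eqxx.
move=> j a.
have hn0 : 0 < n := ltnW hn.
have hS1 := shadA_C hn0 hu hv huv (hcl 1).
have hm := card_Lseg hu hv huv.
have ha : a + (rank n d u).+1 = 'C(n + d - 1, d).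
  rewrite /a card_a //; clear -hn; case: n hn => [|k] // _.
  by rewrite size_mons addSn subn1.
set p := rank n d u in hS1 hm ha.
set m := card_deg n d (Lseg n d u v) in hm.
have hsz : (rank n d v).+1 <= size (mons n d).
  rewrite -card_Linit // /card_deg; exact: count_size.
rewrite -ha.
have -> : (a + p.+1 <= a + (j + 1)) = (p <= j) by rewrite leq_add2l addn1.
rewrite /gotzmann -/m.
split.
-
  move=> hg; apply/contraT; rewrite -ltnNge => hpj.
  have [vj [hvj hnth hrk hsh]] := chain hn hv (leqnn j).
  rewrite subnn in hnth.
  have h2 := shad_inc2 hn hvj hnth.
  set E := init_lexseg_card n d m.
  have hcardE : card_deg n d E = m.
    apply: card_init; apply: leq_trans hsz; rewrite -hm; exact: leq_addr.
  have hcardF : card_deg n d (Rgt n d vj) = rank n d vj.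
    rewrite /card_deg /rank; apply: eq_in_count => w; rewrite mem_mons => hw.
    by rewrite /Rgt hw.
  have hineq := @shad_inj_ineq n d E (Rgt n d vj) hn0.
  have hEF : forall w, inM n d w -> E w -> Rgt n d vj w.
    move=> w hw; rewrite /E init_rank // => hr; rewrite /Rgt hw /=.
    apply: (rank_gt (n := n) (d := d) hw hvj); apply: leq_trans hr _.
    move/leP: hpj => hpj'; apply/leP; move: hm hrk; rewrite ?addnE => hm' hrk'; lia.
  have hdown : forall w w', inM n d w -> inM n d w' -> E w' -> lexgt w w' -> E w.
    move=> w w' hw hw'; rewrite /E !init_rank // => h1 h3.
    exact: ltn_trans (rank_lt hw h3) h1.
  have := hineq hEF hdown; rewrite hcardE hcardF => hi.
  rewrite hg in hS1.
  move/leP: hi => hi'; move/leP: h2 => h2'; move/leP: hpj => hpj'.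
  rewrite ?addnE in hi' h2' hsh hrk hS1 hm hpj'; rewrite -/E in hS1; lia.
-
  move=> hpj.
  have [vp [hvp hnth hrk hsh]] := chain hn hv hpj.
  have hmvp : m = (rank n d vp).+1.
    move: hm hrk; rewrite ?addnE => hm' hrk'; lia.
  rewrite hmvp.
  have -> : card_deg n d.+1 (shad n d (init_lexseg_card n d (rank n d vp).+1)) =
            card_deg n d.+1 (shad n d (Linit n d vp)).
    by apply: eq_count; apply: shad_ext; apply: init_Linit.
  move: hsh hS1; rewrite ?addnE => hsh hS1; lia.
Qed.
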